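(* Let $(X,d)$ be a complete metric space, let $N\in\mathbb{N}\setminus\{0\}$, let $\alpha:X\times X\rightarrow[0,+\infty)$ be $N$--transitive, and let $T:X\rightarrow X$ be an $\alpha$--contractive mapping of Meir--Keeler type satisfying: (A1) $T$ is $\alpha$--admissible; (A2) there exists $x_{0}\in X$ such that $\alpha(x_{0},Tx_{0})\geq1$; (A3) $T$ is $\alpha$--orbitally continuous. Then $T$ has a fixed point, i.e., there exists $x^{\ast}\in X$ with $Tx^{\ast}=x^{\ast}$.
   Context: $\mathbb{N}$ is the set of non-negative integers; $T^n$ is the $n$-th iterate of $T$. $T$ is an $\alpha$--contractive mapping of Meir--Keeler type if for every $\varepsilon>0$ there exists $\delta(\varepsilon)>0$ such that for all $x,y\in X$: $\varepsilon\leq d(x,y)<\varepsilon+\delta(\varepsilon)$ implies $\alpha(x,y)d(Tx,Ty)<\varepsilon$. $T$ is $\alpha$--admissible if $\alpha(x,y)\geq1$ implies $\alpha(Tx,Ty)\geq1$. $\alpha$ is $N$--transitive if for all $x_0,x_1,\dots,x_{N+1}\in X$ with $\alpha(x_i,x_{i+1})\geq1$ for all $i\in\{0,\dots,N\}$ one has $\alpha(x_0,x_{N+1})\geq1$. A sequence $\{x_n\}$ in $X$ is $(T,\alpha)$--orbital if $x_n=T^nx_0$ and $\alpha(x_n,x_{n+1})\geq1$ for all $n\in\mathbb{N}$. $T$ is $\alpha$--orbitally continuous if for every $(T,\alpha)$--orbital sequence $\{x_n\}$ with $x_n\rightarrow x\in X$ there is a subsequence $\{x_{n(k)}\}$ with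 $Tx_{n(k)}\rightarrow Tx$. *)

(* Defs.v *)
From Stdlib Require Import Reals.
Open Scope R_scope.

Definition is_metric {X : Type} (d : X -> X -> R) : Prop :=
  (forall x y, 0 <= d x y) /\
  (forall x y, d x y = 0 <-> x = y) /\
  (forall x y, d x y = d y x) /\
  (forall x y z, d x z <= d x y + d y z).

Definition converges_to {X : Type} (d : X -> X -> R) (u : nat -> X) (x : X) : Prop :=
  forall eps, 0 < eps -> exists N, forall n, (N <= n)%nat -> d (u n) x < eps.

Definition cauchy_seq {X : Type} (d : X -> X -> R) (u : nat -> X) : Prop :=
  forall eps, 0 < eps -> exists N, forall m n, (N <= m)%nat -> (N <= n)%nat ->
    d (u m) (u n) < eps.

Definition complete_metric {X : Type} (d : X -> X -> R) : Prop :=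
  forall u : nat -> X, cauchy_seq d u -> exists x, converges_to d u x.

Fixpoint iter_map {X : Type} (T : X -> X) (n : nat) (x : X) : X :=
  match n with
  | O => x
  | S k => T (iter_map T k x)
  end.

Definition alpha_MK_contractive {X : Type} (d : X -> X -> R) (alpha : X -> X -> R)
  (T : X -> X) : Prop :=
  forall eps, 0 < eps -> exists delta, 0 < delta /\
    forall x y, eps <= d x y -> d x y < eps + delta ->
      alpha x y * d (T x) (T y) < eps.

Definition alpha_admissible {X : Type} (alpha : X -> X -> R) (T : X -> X) : Prop :=
  forall x y, 1 <= alpha x y -> 1 <= alpha (T x) (T y).

Definition N_transitive {X : Type} (N : nat) (alpha : X -> X -> R) : Prop :=
  forall x : nat -> X,
    (forall i, (i <= N)%nat -> 1 <= alpha (x i) (x (S i))) ->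
    1 <= alpha (x O) (x (S N)).

Definition orbital {X : Type} (alpha : X -> X -> R) (T : X -> X) (x : nat -> X) : Prop :=
  forall n, x n = iter_map T n (x O) /\ 1 <= alpha (x n) (x (S n)).

Definition alpha_orbitally_continuous {X : Type} (d : X -> X -> R)
  (alpha : X -> X -> R) (T : X -> X) : Prop :=
  forall (x : nat -> X) (z : X), orbital alpha T x -> converges_to d x z ->
    exists phi : nat -> nat, (forall k, (phi k < phi (S k))%nat) /\
      converges_to d (fun k => T (x (phi k))) (T z).

(* Main.v *)
Require Import Defs.
From Stdlib Require Import Reals.
From Stdlib Require Import Lra Lia.
Open Scope R_scope.

Theorem theorem2 (X : Type) (d : X -> X -> R) (N : nat) (alpha : X -> X -> R)
  (T : X -> X) :
  is_metric d ->
  complete_metric d ->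
  (0 < N)%nat ->
  (forall x y, 0 <= alpha x y) ->
  N_transitive N alpha ->
  alpha_MK_contractive d alpha T ->
  alpha_admissible alpha T ->
  (exists x0, 1 <= alpha x0 (T x0)) ->
  alpha_orbitally_continuous d alpha T ->
  exists xs, T xs = xs.
Proof.
  intros [dpos [dzero [dsym dtri]]] Hcomp HN Hapos HNt HMK Hadm [x0 Hx0] Hcont.
  set (x := fun n => iter_map T n x0).
  assert (H1 : forall n, 1 <= alpha (x n) (x (S n))).
  { induction n. exact Hx0. apply Hadm. exact IHn. }
  assert (Hle : forall a b, 1 <= alpha a b -> d (T a) (T b) <= d a b).
  { intros a b Hab. destruct (Req_dec (d a b) 0) as [E|E].
    - apply dzero in E. subst b. assert (d (T a) (T a) = 0) by (apply dzero; auto). assert (d a a = 0) by (apply dzero; auto). lra.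
    - assert (P : 0 < d a b) by (pose proof (dpos a b); lra).
      destruct (HMK _ P) as [de [Hde Hm]].
      specialize (Hm a b (Rle_refl _) ltac:(lra)).
      pose proof (dpos (T a) (T b)). nra. }
  assert (HMK2 : forall eps, 0 < eps -> exists de, 0 < de /\ forall a b,
             1 <= alpha a b -> d a b < eps + de -> d (T a) (T b) < eps).
  { intros eps He. destruct (HMK _ He) as [de [Hde Hm]]. exists de; split; auto.
    intros a b Hab Hd. destruct (Rle_lt_dec eps (d a b)).
    - specialize (Hm a b r Hd). pose proof (dpos (T a) (T b)). nra.
    - pose proof (Hle a b Hab). lra. }
  set (dn := fun n => d (x n) (x (S n))).
  assert (Hdec : Un_decreasing dn).
  { intro n. unfold dn. apply (Hle (x n) (x (S n))). apply H1. }
  assert (Hd0 : forall eta, 0 < eta -> exists M, forall n, (M <= n)%nat -> dn n < eta).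
  { assert (Hlb : has_lb dn).
    { exists 0. intros y [i ->]. unfold opp_seq. pose proof (dpos (x i) (x (S i))).
      unfold dn. lra. }
    destruct (decreasing_cv dn Hdec Hlb) as [l Hl].
    assert (Hll : forall n, l <= dn n).
    { intro n. destruct (Rle_lt_dec l (dn n)) as [r|r]; auto.
      destruct (Hl (l - dn n) ltac:(lra)) as [N0 HN0].
      specialize (HN0 (max N0 n) ltac:(lia)).
      pose proof (decreasing_prop dn n (max N0 n) Hdec ltac:(lia)).
      unfold Rdist in HN0. apply Rabs_def2 in HN0. lra. }
    destruct (Rle_lt_dec l 0) as [Hl0|Hl0].
    - intros eta He. destruct (Hl eta He) as [N0 HN0]. exists N0. intros n Hn.
      specialize (HN0 n Hn). unfold Rdist in HN0. apply Rabs_def2 in HN0. lra.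
    - exfalso. destruct (HMK2 l Hl0) as [de [Hde Hm]].
      destruct (Hl de Hde) as [N0 HN0]. specialize (HN0 N0 (le_n _)).
      unfold Rdist in HN0. apply Rabs_def2 in HN0.
      specialize (Hm (x N0) (x (S N0)) (H1 N0) ltac:(unfold dn in HN0; lra)).
      specialize (Hll (S N0)). unfold dn in Hll. unfold x in Hll, Hm. simpl in Hll, Hm.
      exact (Rlt_not_le _ _ Hm Hll). }
  destruct N as [|N']; [lia|].
  assert (Halpha : forall M j, 1 <= alpha (x M) (x (M + j * S N' + 1)%nat)).
  { intros M j. induction j.
    - replace (M + 0 * S N' + 1)%nat with (S M) by lia. apply H1.
    - set (y := fun i => match i with O => x M | _ => x (M + j * S N' + i)%nat end).
      specialize (HNt y). simpl in HNt.
      replace (M + S j * S N' + 1)%nat with (M + j * S N' + S (S N'))%nat by lia.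
      apply HNt. intros i Hi. destruct i as [|k].
      + exact IHj.
      + replace (M + j * S N' + S (S k))%nat with (S (M + j * S N' + S k)) by lia.
        apply H1. }
  assert (Hchain : forall eta M, (forall n, (M <= n)%nat -> dn n < eta) ->
            forall n k, (M <= n)%nat -> d (x n) (x (n + k)%nat) <= INR k * eta).
  { intros eta M HM n k Hn. induction k.
    - rewrite Nat.add_0_r. assert (d (x n) (x n) = 0) by (apply dzero; auto). simpl; lra.
    - rewrite Nat.add_succ_r, S_INR.
      pose proof (dtri (x n) (x (n + k)%nat) (x (S (n + k)))).
      pose proof (HM (n + k)%nat ltac:(lia)). unfold dn in *. lra. }
  assert (Hcauchy : cauchy_seq d x).
  { intros e He. set (eps := e / 6).
    assert (Heps : 0 < eps) by (unfold eps; lra).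
    destruct (HMK2 eps Heps) as [de [Hde Hm]].
    set (de' := Rmin de eps).
    assert (Hde' : 0 < de') by (unfold de'; apply Rmin_pos; lra).
    assert (Hde1 : de' <= de) by apply Rmin_l.
    assert (Hde2 : de' <= eps) by apply Rmin_r.
    pose proof (pos_INR N') as HN'.
    set (eta := de' / (INR N' + 2)).
    assert (Heta : 0 < eta) by (unfold eta; apply Rdiv_lt_0_compat; lra).
    assert (Heta2 : (INR N' + 1) * eta < de').
    { unfold eta. apply (Rmult_lt_reg_r (INR N' + 2)); [lra|].
      field_simplify; lra. }
    destruct (Hd0 eta Heta) as [M HM].
    assert (HP : forall j, d (x M) (x (M + j * S N' + 1)%nat) < eps + de').
    { induction j.
      - replace (M + 0 * S N' + 1)%nat with (S M) by lia.
        pose proof (HM M (le_n _)). unfold dn in *. nra.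
      - set (m := (M + j * S N' + 1)%nat) in *.
        pose proof (Hm (x M) (x m) (Halpha M j) ltac:(lra)) as Hs.
        change (T (x M)) with (x (S M)) in Hs. change (T (x m)) with (x (S m)) in Hs.
        pose proof (dtri (x M) (x (S M)) (x (S m))).
        pose proof (HM M (le_n _)). unfold dn in *.
        pose proof (Hchain eta M HM (S m) N' ltac:(unfold m; lia)).
        replace (M + S j * S N' + 1)%nat with (S m + N')%nat by (unfold m; lia).
        pose proof (dtri (x M) (x (S m)) (x (S m + N')%nat)). nra. }
    assert (HQ : forall m, (M <= m)%nat -> d (x M) (x m) < 3 * eps).
    { intros m Hm'. destruct (Nat.eq_dec m M) as [->|Hne].
      - assert (d (x M) (x M) = 0) by (apply dzero; auto). lra.
      - pose proof (Nat.div_mod (m - S M) (S N') ltac:(lia)) as Hdm.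
        pose proof (Nat.mod_upper_bound (m - S M) (S N') ltac:(lia)) as Hr.
        set (j := ((m - S M) / S N')%nat) in *.
        set (r := ((m - S M) mod S N')%nat) in *.
        pose proof (HP j).
        pose proof (Hchain eta M HM (M + j * S N' + 1)%nat r ltac:(lia)).
        replace m with (M + j * S N' + 1 + r)%nat by lia.
        pose proof (dtri (x M) (x (M + j * S N' + 1)%nat) (x (M + j * S N' + 1 + r)%nat)).
        assert (INR r <= INR N') by (apply le_INR; lia).
        nra. }
    exists M. intros m n Hm1 Hn1.
    pose proof (HQ m Hm1). pose proof (HQ n Hn1).
    pose proof (dtri (x m) (x M) (x n)). rewrite (dsym (x m) (x M)) in *.
    unfold eps in *. lra. }
  destruct (Hcomp x Hcauchy) as [z Hz].
  assert (Horb : orbital alpha T x).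
  { intro n. split; [reflexivity | apply H1]. }
  destruct (Hcont x z Horb Hz) as [phi [Hphi Hconv]].
  assert (Hphik : forall k, (k <= phi k)%nat).
  { induction k; [lia|]. specialize (Hphi k). lia. }
  exists z. symmetry. apply dzero.
  destruct (Req_dec (d z (T z)) 0) as [E|E]; auto. exfalso.
  assert (P : 0 < d z (T z)) by (pose proof (dpos z (T z)); lra).
  destruct (Hz (d z (T z) / 2) ltac:(lra)) as [N1 HN1].
  destruct (Hconv (d z (T z) / 2) ltac:(lra)) as [N2 HN2].
  set (k := max N1 N2).
  specialize (HN1 (S (phi k)) ltac:(pose proof (Hphik k); unfold k in *; lia)).
  specialize (HN2 k ltac:(unfold k; lia)). simpl in HN2.
  change (T (x (phi k))) with (x (S (phi k))) in HN2.
  pose proof (dtri z (x (S (phi k))) (T z)). rewrite dsym in HN1. lra.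
Qed.
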